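(* Let $d\ge3$, $n\ge1$, $0\le c<\frac{1}{d(d-1)}$, and let $$\rho(c,0)=\Big(\frac1{2d}-\frac{d-1}2c\Big)\sum_{i=0}^{d-1}|ii\rangle\langle ii|+\frac1{d(d-1)}\sum_{i<j}|\psi^-_{ij}\rangle\langle\psi^-_{ij}|+c\sum_{i<j}|\psi^+_{ij}\rangle\langle\psi^+_{ij}|.$$ Then the null space of $(\rho(c,0)^{PT})^{\otimes n}$ contains no nonzero vector of Schmidt rank less than three.
   Context: $|\psi^{\pm}_{ij}\rangle=\frac1{\sqrt2}(|ij\rangle\pm|ji\rangle)$, sums over $0\le i<j\le d-1$. $\rho^{PT}$ is the partial transpose on the second factor of $\mathbb{C}^d\otimes\mathbb{C}^d$. The operator acts on $(\mathbb{C}^d\otimes\mathbb{C}^d)^{\otimes n}$, regarded as a bipartite space $(\mathbb{C}^d)^{\otimes n}_A\otimes(\mathbb{C}^d)^{\otimes n}_B$ with the first factor of each copy belonging to $A$; Schmidt rank is with respect to this bipartition. *)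

(* Defs.v *)
From HB Require Import structures.
From mathcomp Require Import all_boot all_order all_algebra.
From mathcomp Require Import reals.
From mathcomp.real_closed Require Import complex.
Set Implicit Arguments. Unset Strict Implicit. Unset Printing Implicit Defensive.
Import Order.TTheory GRing.Theory Num.Theory.
Local Open Scope ring_scope.

Section Defs.
Variables (R : realType) (d : nat).
Local Notation C := (R[i]).

(* basis index of C^d (x) C^d : pairs (i,j) standing for |ij> *)
Definition idx := ('I_d * 'I_d)%type.

Definition ket (i j : 'I_d) : idx -> C := fun x => (x == (i, j))%:R.

(* |psi^{+/-}_{ij}> = (|ij> +/- |ji>)/sqrt 2 ; s = 1 or s = -1 *)
Definition psi (s : C) (i j : 'I_d) : idx -> C :=
  fun x => (sqrtC 2)^-1 * (ket i j x + s * ket j i x).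

Definition proj (v : idx -> C) : idx -> idx -> C := fun x y => v x * (v y)^*.

Definition rho (c : R) : idx -> idx -> C := fun x y =>
  ((1 / (2 * d%:R) - (d%:R - 1) / 2 * c)%:C)%C * \sum_(i : 'I_d) proj (ket i i) x y
  + (1 / (d%:R * (d%:R - 1))) * \sum_(i : 'I_d) \sum_(j : 'I_d | (i < j)%N) proj (psi (-1) i j) x y
  + (c%:C)%C * \sum_(i : 'I_d) \sum_(j : 'I_d | (i < j)%N) proj (psi 1 i j) x y.

(* partial transpose on the second factor:
   <ij| rho^PT |kl> = <il| rho |kj> *)
Definition pt (M : idx -> idx -> C) : idx -> idx -> C :=
  fun x y => M (x.1, y.2) (y.1, x.2).

(* (M)^{(x) n} on (C^d (x) C^d)^{(x) n}; basis indexed by the n copies *)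
Definition tpow (n : nat) (M : idx -> idx -> C) :
  {ffun 'I_n -> idx} -> {ffun 'I_n -> idx} -> C :=
  fun X Y => \prod_(k < n) M (X k) (Y k).

Definition in_null (n : nat) (M : {ffun 'I_n -> idx} -> {ffun 'I_n -> idx} -> C)
  (v : {ffun 'I_n -> idx} -> C) : Prop :=
  forall X, \sum_Y M X Y * v Y = 0.

(* Schmidt rank of v w.r.t. A = first factors of all copies, B = second factors:
   rank of the coefficient matrix  (a, b) |-> v(k |-> (a k, b k)). *)
Definition coefmx (n : nat) (v : {ffun 'I_n -> idx} -> C) :
  'M[C]_(#|{ffun 'I_n -> 'I_d}|, #|{ffun 'I_n -> 'I_d}|) :=
  \matrix_(p, q) v [ffun k => ((enum_val p : {ffun 'I_n -> 'I_d}) k,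
                               (enum_val q : {ffun 'I_n -> 'I_d}) k)].

Definition schmidt_rank (n : nat) (v : {ffun 'I_n -> idx} -> C) : nat :=
  \rank (coefmx v).

End Defs.

(* Main.v *)
Require Import Defs.
From HB Require Import structures.
From mathcomp Require Import all_boot all_order all_algebra.
From mathcomp Require Import reals.
From mathcomp.real_closed Require Import complex.
From mathcomp Require Import ring lra.
Set Implicit Arguments. Unset Strict Implicit. Unset Printing Implicit Defensive.
Import Order.TTheory GRing.Theory Num.Theory.
Local Open Scope ring_scope.
Section Gen.
Variables (R : realType) (d : nat).
Local Notation C := (R[i]).

Definition fcons (T : Type) n (x : T) (f : {ffun 'I_n -> T}) : {ffun 'I_n.+1 -> T} :=
  [ffun k => if unlift ord0 k is Some k' then f k' else x].
Definition ftail (T : Type) n (X : {ffun 'I_n.+1 -> T}) : {ffun 'I_n -> T} :=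
  [ffun k => X (lift ord0 k)].

Lemma fcons0 T n (x : T) (f : {ffun 'I_n -> T}) : fcons x f ord0 = x.
Proof. by rewrite ffunE unlift_none. Qed.
Lemma fconsS T n (x : T) (f : {ffun 'I_n -> T}) k : fcons x f (lift ord0 k) = f k.
Proof. by rewrite ffunE liftK. Qed.
Lemma fconsE T n (X : {ffun 'I_n.+1 -> T}) : fcons (X ord0) (ftail X) = X.
Proof.
apply/ffunP => k; case: (unliftP ord0 k) => [j ->|->].
  by rewrite fconsS ffunE.
by rewrite fcons0.
Qed.
Lemma ftail_fcons T n (x : T) (f : {ffun 'I_n -> T}) : ftail (fcons x f) = f.
Proof. by apply/ffunP => k; rewrite ffunE fconsS. Qed.

Lemma sum_fcons (T : finType) n (F : {ffun 'I_n.+1 -> T} -> C) :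
  \sum_Y F Y = \sum_(y : T) \sum_(Y : {ffun 'I_n -> T}) F (fcons y Y).
Proof.
rewrite pair_big /= (reindex (fun p : T * {ffun 'I_n -> T} => fcons p.1 p.2)) //=.
exists (fun X : {ffun 'I_n.+1 -> T} => (X ord0, ftail X)) => [[x f] _ | X _] /=.
  by rewrite fcons0 ftail_fcons.
by rewrite fconsE.
Qed.

Variable A : idx d -> idx d -> C.

Lemma tpowS n x y (X Y : {ffun 'I_n -> idx d}) :
  tpow A (fcons x X) (fcons y Y) = A x y * tpow A X Y.
Proof. rewrite /tpow big_ord_recl !fcons0; congr (_ * _); apply: eq_bigr => k _; by rewrite !fconsS. Qed.

Definition ent n (v : {ffun 'I_n -> idx d} -> C) (p q : {ffun 'I_n -> 'I_d}) :=
  v [ffun k => (p k, q k)].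

Definition noDiag3 n (v : {ffun 'I_n -> idx d} -> C) :=
  forall p1 p2 p3 q1 q2 q3, ent v p1 q2 = 0 -> ent v p1 q3 = 0 -> ent v p2 q1 = 0 ->
    ent v p2 q3 = 0 -> ent v p3 q1 = 0 -> ent v p3 q2 = 0 ->
    ent v p1 q1 * ent v p2 q2 * ent v p3 q3 = 0.

Lemma fcons_pair n (a b : 'I_d) (p q : {ffun 'I_n -> 'I_d}) :
  fcons (a, b) [ffun k => (p k, q k)] = [ffun k => (fcons a p k, fcons b q k)].
Proof.
apply/ffunP => k; rewrite !ffunE; case: (unliftP ord0 k) => [j _|_] //.
by rewrite ffunE.
Qed.

Lemma ent_slice n (v : {ffun 'I_n.+1 -> idx d} -> C) a b p q :
  ent (fun Y => v (fcons (a, b) Y)) p q = ent v (fcons a p) (fcons b q).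
Proof. by rewrite /ent fcons_pair. Qed.

Lemma noDiag3_slice n (v : {ffun 'I_n.+1 -> idx d} -> C) a b :
  noDiag3 v -> noDiag3 (fun Y => v (fcons (a, b) Y)).
Proof.
move=> H p1 p2 p3 q1 q2 q3; rewrite !ent_slice; exact: H.
Qed.

Lemma ffun_split n (X : {ffun 'I_n -> idx d}) :
  X = [ffun k => ([ffun k => (X k).1] k, [ffun k => (X k).2] k)].
Proof. by apply/ffunP => k; rewrite !ffunE; case: (X k). Qed.

Hypothesis d3 : (3 <= d)%N.
Hypothesis KA : forall w : idx d -> C, (forall x, \sum_y A x y * w y = 0) ->
  (forall a b : 'I_d, a != b -> w (a, b) = 0) /\ (forall a b : 'I_d, w (a, a) = w (b, b)).

Lemma main_ind n : forall v : {ffun 'I_n -> idx d} -> C,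
  in_null (tpow A) v -> noDiag3 v -> forall X, v X = 0.
Proof.
elim: n => [|n IH] v Hn Hd X.
  have := Hn X; rewrite /tpow.
  under eq_bigr => Y _ do rewrite big_ord0 mul1r.
  rewrite (bigD1 X) //= big1 ?addr0 // => Y /negP H; exfalso; apply: H.
  by apply/eqP/ffunP => -[].
pose u y X' := \sum_(Y' : {ffun 'I_n -> idx d}) tpow A X' Y' * v (fcons y Y').
have Hu : forall X' x, \sum_y A x y * u y X' = 0.
  move=> X' x; have := Hn (fcons x X'); rewrite sum_fcons.
  under eq_bigr => y _ do under eq_bigr => Y' _ do rewrite tpowS -mulrA.
  by under eq_bigr => y _ do rewrite -mulr_sumr.
have K X' := KA (Hu X').
have Hoff : forall a b : 'I_d, a != b -> forall Y', v (fcons (a, b) Y') = 0.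
  move=> a b ab; apply: IH; last exact: noDiag3_slice.
  by move=> X'; exact: (K X').1 a b ab.
have [a0 Ha0] : exists a0 : 'I_d, forall Y', v (fcons (a0, a0) Y') = 0.
  case: (boolP [exists a : 'I_d, [forall Y', v (fcons (a, a) Y') == 0]]).
    by case/existsP => a /forallP Ha; exists a => Y'; apply/eqP.
  move/existsPn => Hn'.
  have Hw a : exists Y', v (fcons (a, a) Y') != 0.
    by have /forallPn [Y' HY] := Hn' a; exists Y'.
  pose i0 : 'I_d := Ordinal (leq_trans (isT : (1 <= 3)%N) d3).
  pose i1 : 'I_d := Ordinal (leq_trans (isT : (2 <= 3)%N) d3).
  pose i2 : 'I_d := Ordinal d3.
  have [Y0 H0] := Hw i0; have [Y1 H1] := Hw i1; have [Y2 H2] := Hw i2.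
  have Ho : forall (a b : 'I_d) (Ya Yb : {ffun 'I_n -> idx d}), a != b ->
     ent v (fcons a [ffun k => (Ya k).1]) (fcons b [ffun k => (Yb k).2]) = 0.
    by move=> a b Ya Yb ab; rewrite -ent_slice; apply: Hoff.
  have Hdg : forall (a : 'I_d) (Ya : {ffun 'I_n -> idx d}),
     ent v (fcons a [ffun k => (Ya k).1]) (fcons a [ffun k => (Ya k).2]) = v (fcons (a, a) Ya).
    by move=> a Ya; rewrite -ent_slice /ent -ffun_split.
  have := Hd _ _ _ _ _ _ (Ho i0 i1 Y0 Y1 isT) (Ho i0 i2 Y0 Y2 isT) (Ho i1 i0 Y1 Y0 isT)
     (Ho i1 i2 Y1 Y2 isT) (Ho i2 i0 Y2 Y0 isT) (Ho i2 i1 Y2 Y1 isT).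
  by rewrite !Hdg => /eqP; rewrite !mulf_eq0 (negbTE H0) (negbTE H1) (negbTE H2).
have Hdiag : forall b : 'I_d, forall Y', v (fcons (b, b) Y') = 0.
  move=> b; apply: IH; last exact: noDiag3_slice.
  move=> X'; change (u (b, b) X' = 0); have -> : u (b, b) X' = u (a0, a0) X' by exact: (K X').2.
  by rewrite /u big1 // => Y' _; rewrite Ha0 mulr0.
rewrite -(fconsE X); case: (X ord0) => a b.
case: (eqVneq a b) => [<-|ab]; [exact: Hdiag | exact: Hoff].
Qed.

End Gen.
Lemma rank_sub (F : fieldType) m n m' n' (f : 'I_m' -> 'I_m) (g : 'I_n' -> 'I_n)
  (M : 'M[F]_(m, n)) : (\rank (\matrix_(i, j) M (f i) (g j)) <= \rank M)%N.
Proof.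
have -> : \matrix_(i, j) M (f i) (g j) = rowsub f (rowsub g M^T)^T.
  by apply/matrixP => i j; rewrite !mxE.
rewrite rowsubE (leq_trans (mxrankM_maxr _ _)) // mxrank_tr rowsubE.
by rewrite (leq_trans (mxrankM_maxr _ _)) // mxrank_tr.
Qed.

Lemma rank_noDiag3 (R : realType) (d n : nat) (v : {ffun 'I_n -> idx d} -> R[i]) :
  (@schmidt_rank R d n v < 3)%N -> noDiag3 v.
Proof.
move=> Hr p1 p2 p3 q1 q2 q3 h12 h13 h21 h23 h31 h32.
apply/eqP; apply: contraLR Hr; rewrite -leqNgt => Hne.
pose P (i : 'I_3) := nth p1 [:: p1; p2; p3] i.
pose Q (i : 'I_3) := nth q1 [:: q1; q2; q3] i.
pose S := \matrix_(i < 3, j < 3) coefmx v (enum_rank (P i)) (enum_rank (Q j)).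
have -> : (3 = \rank S)%N.
  have -> : S = diag_mx (\row_i ent v (P i) (Q i)).
    apply/matrixP => i j; rewrite !mxE !enum_rankK.
    by case: i => -[|[|[|]]] ? ; case: j => -[|[|[|]]] ? //=.
  rewrite mxrank_unit // unitmxE det_diag unitfE.
  rewrite !big_ord_recr big_ord0 /= !mxE mul1r.
  exact: Hne.
exact: rank_sub.
Qed.
Section Rho.
Variables (R : realType) (d : nat).
Local Notation C := (R[i]).

Lemma sum_ind (I : finType) (k : I) (F : I -> C) :
  \sum_i (k == i)%:R * F i = F k.
Proof.
rewrite (bigD1 k) //= eqxx mul1r big1 ?addr0 // => i /negbTE.
by rewrite eq_sym => ->; rewrite mul0r.
Qed.

Lemma sum_lt2 (F : 'I_d -> 'I_d -> C) (a b : 'I_d) :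
  \sum_(i : 'I_d) \sum_(j : 'I_d | (i < j)%N) ((a == i) && (b == j))%:R * F i j = ((a < b)%N)%:R * F a b.
Proof.
transitivity (\sum_(i : 'I_d) (a == i)%:R * \sum_(j : 'I_d) (b == j)%:R * (((i < j)%N)%:R * F i j)).
  apply: eq_bigr => i _; rewrite big_mkcond mulr_sumr; apply: eq_bigr => j _ /=.
  by case: (i < j)%N; case: (a == i); case: (b == j); rewrite /= ?mul0r ?mul1r ?mulr0.
by under eq_bigr => i _ do rewrite sum_ind; rewrite sum_ind.
Qed.

Lemma ind_pair (x y : idx d) (i j : 'I_d) :
  (x == (i, j))%:R * (y == (i, j))%:R = ((x.1 == i) && (x.2 == j))%:R * (y == x)%:R :> C.
Proof.
case: x => x1 x2 /=; rewrite xpair_eqE.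
by case: (eqVneq x1 i) => [->|]; case: (eqVneq x2 j) => [->|] //= _; rewrite !mul0r.
Qed.

Definition T1 (p q : idx d) : C := ((p.1 < p.2)%N && (q == p))%:R.
Definition T2 (p q : idx d) : C := ((p.1 < p.2)%N && (q == (p.2, p.1)))%:R.
Definition T3 (p q : idx d) : C := ((p.2 < p.1)%N && (q == (p.2, p.1)))%:R.
Definition T4 (p q : idx d) : C := ((p.2 < p.1)%N && (q == p))%:R.

Lemma S0E (p q : idx d) : \sum_(i : 'I_d) proj (ket R i i) p q = ((p.1 == p.2) && (p == q))%:R :> C.
Proof.
rewrite /proj /ket; under eq_bigr => i _ do rewrite conjC_nat ind_pair.
under eq_bigr => i _ do rewrite -mulnb natrM.
rewrite -big_distrl /=.
rewrite sum_ind eq_sym [q == p]eq_sym -natrM mulnb.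
by case: (p.2 == p.1).
Qed.

Lemma SsE (s : C) (p q : idx d) : s^* = s ->
  \sum_(i : 'I_d) \sum_(j : 'I_d | (i < j)%N) proj (psi s i j) p q =
  2^-1 * (T1 p q + s * T2 p q + s * T3 p q + s * s * T4 p q).
Proof.
move=> hs.
have E i j : proj (psi s i j) p q = 2^-1 *
   ((ket R i j p * ket R i j q) + s * (ket R i j p * ket R j i q) + s * (ket R j i p * ket R i j q)
    + s * s * (ket R j i p * ket R j i q)).
  rewrite /proj /psi rmorphM /= fmorphV rmorphD rmorphM /= hs /ket !conjC_nat.
  rewrite geC0_conj ?sqrtC_ge0 ?ler0n // mulrACA -invfM -expr2 sqrtCK.
  congr (_ * _); ring.
under eq_bigr => i _ do under eq_bigr => j _ do rewrite E.
under eq_bigr => i _ do rewrite -mulr_sumr. rewrite -mulr_sumr; congr (_ * _).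
under eq_bigr => i _ do rewrite !big_split /= -!mulr_sumr. rewrite !big_split /= -!mulr_sumr.
have F1 (x y : idx d) i j : ket R i j x * ket R i j y = ((x.1 == i) && (x.2 == j))%:R * (y == x)%:R :> C.
  by rewrite /ket ind_pair.
have F2 (x y : idx d) i j : ket R j i x * ket R j i y = ((x.2 == i) && (x.1 == j))%:R * (y == x)%:R :> C.
  by rewrite /ket ind_pair andbC.
have F3 (x y : idx d) i j : ket R i j x * ket R j i y = ((x.1 == i) && (x.2 == j))%:R * (y == (x.2, x.1))%:R :> C.
  rewrite /ket; case: x => x1 x2 /=; rewrite xpair_eqE.
  by case: (eqVneq x1 i) => [->|]; case: (eqVneq x2 j) => [->|] //= _; rewrite !mul0r.
have F4 (x y : idx d) i j : ket R j i x * ket R i j y = ((x.2 == i) && (x.1 == j))%:R * (y == (x.2, x.1))%:R :> C.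
  rewrite /ket; case: x => x1 x2 /=; rewrite xpair_eqE.
  by case: (eqVneq x1 j) => [->|]; case: (eqVneq x2 i) => [->|] //= _; rewrite ?andbF !mul0r.
under eq_bigr => i _ do under eq_bigr => j _ do rewrite F1.
under [X in _ + s * X + _ + _]eq_bigr => i _ do under eq_bigr => j _ do rewrite F3.
under [X in _ + _ + s * X + _]eq_bigr => i _ do under eq_bigr => j _ do rewrite F4.
under [X in _ + _ + _ + s * s * X]eq_bigr => i _ do under eq_bigr => j _ do rewrite F2.
rewrite !(sum_lt2 (fun i j => _)) /T1 /T2 /T3 /T4.
by rewrite -!natrM !mulnb.
Qed.


Variable c : R.
Definition a0 : C := ((1 / (2 * d%:R) - (d%:R - 1) / 2 * c)%:C)%C.
Definition b0 : C := 1 / (d%:R * (d%:R - 1)).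
Definition cc : C := (c%:C)%C.

Lemma rhoE p q : rho c p q = a0 * ((p.1 == p.2) && (p == q))%:R
  + b0 * (2^-1 * (T1 p q - T2 p q - T3 p q + T4 p q))
  + cc * (2^-1 * (T1 p q + T2 p q + T3 p q + T4 p q)).
Proof.
rewrite /rho S0E !SsE ?rmorphN1 ?rmorph1 //.
rewrite /a0 /b0 /cc; congr (_ + _ * (_ * _) + _ * (_ * _)); ring.
Qed.

Lemma A_off (a b : 'I_d) y : a != b -> pt (rho c) (a, b) y = (b0 + cc) / 2 * (y == (a, b))%:R.
Proof.
move=> ab; case: y => y1 y2; rewrite /pt rhoE /T1 /T2 /T3 /T4 /= !xpair_eqE.
rewrite [b == a]eq_sym (negbTE ab) !andbF.
case: (eqVneq y1 a) => [_|h1]; last by rewrite !andbF /=; ring.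
case: (eqVneq y2 b) => [e2|h2]; last by rewrite !andbF /=; ring.
rewrite e2 (negbTE ab) !andbT /=.
case: ltngtP => [h|h|/val_inj h]; last by rewrite h eqxx in ab.
  rewrite /=; ring.
rewrite /=; ring.
Qed.

Lemma A_diag (a k l : 'I_d) :
  pt (rho c) (a, a) (k, l) = (k == l)%:R * (if k == a then a0 else (cc - b0) / 2).
Proof.
rewrite /pt rhoE /T1 /T2 /T3 /T4 /= !xpair_eqE eqxx !andbT.
case: (eqVneq k l) => [<-|hkl].
  case: (eqVneq k a) => [->|hka].
    by rewrite ltnn /=; ring.
  case: ltngtP => [h|h|/val_inj h]; last by rewrite h eqxx in hka.
    by rewrite /=; ring.
  by rewrite /=; ring.
case: (eqVneq k a) => [ka|hka]; case: (eqVneq l a) => [la|hla].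
- by rewrite ka la eqxx in hkl.
- by rewrite /= !andbF /=; ring.
- by rewrite /= !andbF /=; ring.
- by rewrite /= !andbF /=; ring.
Qed.

Lemma sum_ind' (I : finType) (k : I) (F : I -> C) :
  \sum_i (i == k)%:R * F i = F k.
Proof. by under eq_bigr => i _ do rewrite eq_sym; rewrite sum_ind. Qed.

Lemma sum_pair (F : idx d -> C) : \sum_y F y = \sum_i \sum_j F (i, j).
Proof. by rewrite pair_big /=; apply: eq_bigr => -[]. Qed.

Hypothesis d3 : (3 <= d)%N.
Hypothesis c0 : 0 <= c.
Hypothesis c1 : c < 1 / (d%:R * (d%:R - 1)).

Lemma b0E : b0 = (1 / (d%:R * (d%:R - 1)) : R)%:C%C.
Proof. by rewrite /b0 fmorph_div rmorph1 rmorphM rmorphB rmorph_nat rmorph1. Qed.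

Lemma D3 : (3 : R) <= d%:R.
Proof. by rewrite ler_nat. Qed.

Lemma br_gt0 : (0 : R) < 1 / (d%:R * (d%:R - 1)).
Proof.
have := D3 => h; apply: divr_gt0 => //; apply: mulr_gt0; lra.
Qed.

Lemma beta_neq0 : (b0 + cc) / 2 != 0.
Proof.
rewrite mulf_neq0 ?invr_eq0 ?pnatr_eq0 //.
rewrite b0E /cc -rmorphD fmorph_eq0.
apply: lt0r_neq0; by apply: (lt_le_trans br_gt0); rewrite lerDl.
Qed.

Lemma gam_neq0 : a0 - (cc - b0) / 2 != 0.
Proof.
have -> : a0 - (cc - b0) / 2 =
   ((1 / (2 * d%:R) - (d%:R - 1) / 2 * c) - (c - 1 / (d%:R * (d%:R - 1))) / 2 : R)%:C%C.
  rewrite /a0 /cc b0E !(rmorphB, rmorphD, rmorphM, fmorph_div, rmorph_nat, rmorph1, fmorphV) //.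
rewrite (fmorph_eq0 (real_complex R)).
set D : R := d%:R; set br := 1 / (D * (D - 1)).
have hD := D3; rewrite -/D in hD.
have key : 1 / (2 * D) + br / 2 - D * br / 2 = 0.
  rewrite /br; field; apply/andP; split; rewrite ?subr_eq0; apply/eqP; lra.
have -> : 1 / (2 * D) - (D - 1) / 2 * c - (c - br) / 2 =
   D * (br - c) / 2 + (1 / (2 * D) + br / 2 - D * br / 2) by ring.
rewrite key addr0; apply/lt0r_neq0/divr_gt0 => //.
apply: mulr_gt0; first lra.
by rewrite subr_gt0.
Qed.

Lemma KA_rho (w : idx d -> C) : (forall x, \sum_y pt (rho c) x y * w y = 0) ->
  (forall a b : 'I_d, a != b -> w (a, b) = 0) /\ (forall a b : 'I_d, w (a, a) = w (b, b)).
Proof.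
move=> H.
have off : forall a b : 'I_d, a != b -> w (a, b) = 0.
  move=> a b ab; have := H (a, b).
  under eq_bigr => y _ do rewrite (A_off _ ab) -mulrA.
  rewrite -mulr_sumr sum_ind' => /eqP; rewrite mulf_eq0 (negbTE beta_neq0) /=.
  by move/eqP.
split => //.
have diag a : \sum_y pt (rho c) (a, a) y * w y =
   (a0 - (cc - b0) / 2) * w (a, a) + (cc - b0) / 2 * \sum_k w (k, k).
  rewrite sum_pair.
  under eq_bigr => k _ do under eq_bigr => l _ do rewrite A_diag -mulrA.
  under eq_bigr => k _ do rewrite sum_ind.
  have E k : (if k == a then a0 else (cc - b0) / 2) =
      (cc - b0) / 2 + (a == k)%:R * (a0 - (cc - b0) / 2).
    by rewrite [a == k]eq_sym; case: (k == a) => /=; ring.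
  under eq_bigr => k _ do rewrite E mulrDl.
  rewrite big_split /= -mulr_sumr.
  under [X in _ + X]eq_bigr => k _ do rewrite -mulrA.
  by rewrite sum_ind addrC.
move=> a b; have Ha := H (a, a); have Hb := H (b, b).
rewrite diag in Ha; rewrite diag in Hb.
have : (a0 - (cc - b0) / 2) * (w (a, a) - w (b, b)) = 0.
  by rewrite mulrBr; apply/eqP; rewrite subr_eq0; apply/eqP;
     apply: (addIr ((cc - b0) / 2 * \sum_k w (k, k))); rewrite Ha Hb.
move/eqP; rewrite mulf_eq0 (negbTE gam_neq0) /= subr_eq0.
by move/eqP.
Qed.

End Rho.

Theorem theorem3 (R : realType) (d n : nat) (c : R) :
  (3 <= d)%N -> (1 <= n)%N ->
  0 <= c -> c < 1 / (d%:R * (d%:R - 1)) ->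
  forall v : {ffun 'I_n -> idx d} -> R[i],
    (exists X, v X != 0) ->
    @in_null R d n (@tpow R d n (@pt R d (@rho R d c))) v ->
    (3 <= @schmidt_rank R d n v)%N.
Proof.
move=> d3 _ c0 c1 v [X HX] Hn.
rewrite leqNgt; apply/negP => Hr.
have KA := KA_rho d3 c0 c1.
have := main_ind d3 KA Hn (rank_noDiag3 Hr) X.
by move/eqP; rewrite (negbTE HX).
Qed.
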